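(* For a set of reals $X$: (1) $X$ satisfies $\mathrm{Split}(C_\Omega,C_\Lambda)$ if and only if no image $f[X]$ of $X$ under a continuous function $f:X\to[\mathbb N]^\infty$ is a base for a nonprincipal ultrafilter on $\mathbb N$. (2) $X$ satisfies $\mathrm{Split}(B_\Omega,B_\Lambda)$ if and only if no image $f[X]$ of $X$ under a Borel function $f:X\to[\mathbb N]^\infty$ is a base for a nonprincipal ultrafilter on $\mathbb N$. (3) $X$ satisfies $\mathrm{Split}(C_{\mathrm T},C_{\mathrm T})$ if and only if no image of $X$ under a continuous function $f:X\to[\mathbb N]^\infty$ is a simple $P$-point base. (4) $X$ satisfies $\mathrm{Split}(B_{\mathrm T},B_{\mathrm T})$ if and only if no image of $X$ under a Borel function $f:X\to[\mathbb N]^\infty$ is a simple $P$-point base.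
   Context: A set of reals is an infinite topological space homeomorphic to a subset of $\mathbb R$. A cover of a space $X$ is a family $\mathcal U$ of subsets of $X$ with $\bigcup\mathcal U=X$ such that $X\not\subseteq U$ for every $U\in\mathcal U$. A cover $\mathcal U$ is: a large cover if every $x\in X$ lies in infinitely many members; an $\omega$-cover if every finite subset of $X$ is contained in some member; a $\tau$-cover if it is a large cover and for all $x,y\in X$ at least one of $\{U\in\mathcal U: x\in U, y\notin U\}$, $\{U\in\mathcal U: y\in U, x\notin U\}$ is finite. $B_\Lambda,B_\Omega,B_{\mathrm T}$ denote the collections of countable large covers, $\omega$-covers, $\tau$-covers of $X$ by Borel sets, and $C_\Lambda,C_\Omega,C_{\mathrm T}$ the corresponding collections of countable covers by clopen sets. For collections $\mathfrak U,\mathfrak V$ of covers, $X$ satisfies $\mathrm{Split}(\mathfrak U,\mathfrak V)$ if every $\mathcal U\in\mathfrak U$ can be partitioned into two disjoint subfamilies each of which contains a subfamily belonging to $\mathfrak V$. $[\mathbb N]^\infty$ is the set of infinite subsets of $\mathbb N$, a subspace of $P(\mathbb N)$ identified with the Cantor space $\{0,1\}^{\mathbb N}$ via characteristic functions. For $a,b\subseteq\mathbb N$, $a\subseteq^* b$ means $a\setminus b$ is finite. A family $B\subseteq[\mathbb N]^\infty$ is a base for a nonprincipal ultrafilter $U$ on $\mathbb N$ if $U=\{a\in[\mathbb N]^\infty:\exists b\in B\ (b\subseteq^* a)\}$. A simple $P$-point base is a family $B\subseteq[\mathbb N]^\infty$ which is a base for some nonprincipal ultrafilter on $\mathbb N$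 and is linearly ordered by $\subseteq^*$. *)

(* Defs.v *)
From HB Require Import structures.
From mathcomp Require Import all_boot all_algebra.
From mathcomp Require Import all_classical all_reals topology cantor measurable_structure.

Set Implicit Arguments.
Unset Strict Implicit.
Unset Printing Implicit Defensive.

Local Open Scope classical_set_scope.

Definition borel (T : topologicalType) : set (set T) := <<s [set O : set T | open O] >>.

Definition clopen_in (T : topologicalType) (X A : set T) : Prop :=
  A `<=` X /\ (exists O, open O /\ A = O `&` X) /\ (exists C, closed C /\ A = C `&` X).

Definition borel_in (T : topologicalType) (X A : set T) : Prop :=
  A `<=` X /\ exists B, borel B /\ A = B `&` X.

Definition is_cover (T : Type) (X : set T) (F : set (set T)) : Prop :=
  (forall U, F U -> U `<=` X) /\ \bigcup_(U in F) U = X /\ (forall U, F U -> ~ (X `<=` U)).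

Definition large_cover (T : Type) (X : set T) (F : set (set T)) : Prop :=
  is_cover X F /\ forall x, X x -> infinite_set [set U | F U /\ U x].

Definition omega_cover (T : Type) (X : set T) (F : set (set T)) : Prop :=
  is_cover X F /\ forall S, finite_set S -> S `<=` X -> exists U, F U /\ S `<=` U.

Definition tau_cover (T : Type) (X : set T) (F : set (set T)) : Prop :=
  large_cover X F /\ forall x y, X x -> X y ->
    finite_set [set U | F U /\ U x /\ ~ U y] \/ finite_set [set U | F U /\ U y /\ ~ U x].

Definition B_Lambda (T : topologicalType) (X : set T) : set (set (set T)) :=
  [set F | countable F /\ (forall U, F U -> borel_in X U) /\ large_cover X F].
Definition B_Omega (T : topologicalType) (X : set T) : set (set (set T)) :=
  [set F | countable F /\ (forall U, F U -> borel_in X U) /\ omega_cover X F].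
Definition B_Tau (T : topologicalType) (X : set T) : set (set (set T)) :=
  [set F | countable F /\ (forall U, F U -> borel_in X U) /\ tau_cover X F].
Definition C_Lambda (T : topologicalType) (X : set T) : set (set (set T)) :=
  [set F | countable F /\ (forall U, F U -> clopen_in X U) /\ large_cover X F].
Definition C_Omega (T : topologicalType) (X : set T) : set (set (set T)) :=
  [set F | countable F /\ (forall U, F U -> clopen_in X U) /\ omega_cover X F].
Definition C_Tau (T : topologicalType) (X : set T) : set (set (set T)) :=
  [set F | countable F /\ (forall U, F U -> clopen_in X U) /\ tau_cover X F].

Definition SplitCov (T : Type) (UU VV : set (set (set T))) : Prop :=
  forall F, UU F -> exists F1 F2 : set (set T),
    F1 `|` F2 = F /\ F1 `&` F2 = set0 /\
    (exists G1, G1 `<=` F1 /\ VV G1) /\ (exists G2, G2 `<=` F2 /\ VV G2).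

Definition subset_star (a b : set nat) : Prop := finite_set (a `\` b).

Definition nonprincipal_ultrafilter (U : set (set nat)) : Prop :=
  ~ U set0 /\ U setT /\
  (forall a b, U a -> a `<=` b -> U b) /\
  (forall a b, U a -> U b -> U (a `&` b)) /\
  (forall a, U a \/ U (~` a)) /\
  (forall a, finite_set a -> ~ U a).

Definition ultrafilter_base (B : set (set nat)) : Prop :=
  (forall b, B b -> infinite_set b) /\
  nonprincipal_ultrafilter [set a | infinite_set a /\ exists2 b, B b & subset_star b a].

Definition simple_P_point_base (B : set (set nat)) : Prop :=
  ultrafilter_base B /\ forall a b, B a -> B b -> subset_star a b \/ subset_star b a.

(* P(N) identified with the Cantor space via characteristic functions *)
Definition set_of_char (s : cantor_space) : set nat := [set n | s n].

Definition into_infinite (T : Type) (X : set T) (f : T -> cantor_space) : Prop :=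
  forall x, X x -> infinite_set (set_of_char (f x)).

Definition image_fam (T : Type) (X : set T) (f : T -> cantor_space) : set (set nat) :=
  [set set_of_char (f x) | x in X].

Definition borel_fun_on (T : topologicalType) (X : set T) (f : T -> cantor_space) : Prop :=
  forall B : set cantor_space, borel B -> borel_in X (X `&` f @^-1` B).

(* Main.v *)
Require Import Defs.
From HB Require Import structures.
From mathcomp Require Import all_boot all_algebra.
From mathcomp Require Import all_classical all_reals topology cantor measurable_structure.
From mathcomp Require Import zify.

Import numFieldTopology.Exports.
Local Open Scope classical_set_scope.

Module Aux.
Set Implicit Arguments.
Unset Strict Implicit.

Section comb.
Variable T : Type.

Lemma star_inf (a b : set nat) : subset_star a b -> infinite_set a -> infinite_set b.
Proof.
move=> sab ia fb; apply: ia.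
have -> : a = (a `\` b) `|` (a `&` b).
  by apply/seteqP; split=> n /=; [case: (pselect (b n)) => ?; tauto|tauto].
by rewrite finite_setU; split => //; apply: finite_setIr.
Qed.

Lemma star_infI (a b : set nat) : subset_star a b -> infinite_set a -> infinite_set (a `&` b).
Proof.
move=> sab ia fb; apply: ia.
have -> : a = (a `\` b) `|` (a `&` b).
  by apply/seteqP; split=> n /=; [case: (pselect (b n)) => ?; tauto|tauto].
by rewrite finite_setU; split.
Qed.

Lemma inj_image_inf (U : Type) (e : nat -> U) (A : set nat) :
  injective e -> infinite_set A -> infinite_set (e @` A).
Proof.
move=> ie iA fi; apply: iA.
have := @inj_card_eq _ _ A e (in2W ie).
by move/eq_finite_set => <-.
Qed.

End comb.


Section base.
Variables (T : Type) (X : set T) (g : T -> set nat).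
Hypothesis X0 : X !=set0.
Hypothesis ginf : forall x, X x -> infinite_set (g x).
Hypothesis gcent : forall x y z, X x -> X y -> X z -> infinite_set (g x `&` g y `&` g z).
Hypothesis nosplit : forall a, exists2 x, X x & subset_star (g x) a \/ subset_star (g x) (~` a).

Lemma nosplit_base : ultrafilter_base [set g x | x in X].
Proof.
split; first by move=> _ [x Xx <-]; exact: ginf.
have memF (a : set nat) x : X x -> subset_star (g x) a ->
   [set a | infinite_set a /\ exists2 b, [set g x | x in X] b & subset_star b a] a.
  move=> Xx sa; split; first exact: star_inf sa (ginf Xx).
  by exists (g x) => //; exists x.
split; first by case=> /(_ (finite_set0 _)).
split; first by case: X0 => x Xx; apply: (memF _ x) => //; rewrite /subset_star setDT; exact: finite_set0.
split.
  move=> a b [ia [_ [x Xx <-] sa]] ab; apply: (memF _ x) => //.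
  by apply: sub_finite_set sa => n [? /= nb]; split => // /ab.
split.
  move=> a1 a2 [_ [_ [x Xx <-] s1]] [_ [_ [y Xy <-] s2]].
  have [z Xz [sz|sz]] := nosplit (a1 `&` a2); first exact: (memF _ z).
  exfalso; apply: (gcent Xx Xy Xz).
  have : finite_set ((g x `\` a1) `|` (g y `\` a2) `|` (g z `\` ~` (a1 `&` a2))).
    by rewrite !finite_setU; split; [split|].
  apply: sub_finite_set => n [[gxn gyn] gzn].
  case: (pselect (a1 n)) => a1n; last by left; left.
  case: (pselect (a2 n)) => a2n; last by left; right.
  by right; split => // /(_ (conj a1n a2n)).
split.
  move=> a; have [z Xz [sz|sz]] := nosplit a; [left|right]; exact: (memF _ z).
by move=> a fa [].
Qed.
End base.


Section om.
Variables (T : Type) (X : set T) (F : set (set T)).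
Hypothesis X0 : X !=set0.

Lemma omega_inf (S : set T) : omega_cover X F -> finite_set S -> S `<=` X ->
  infinite_set [set U | F U /\ S `<=` U].
Proof.
move=> [[FX [_ FnX]] om] fS SX fFs.
have [x0 Xx0] := X0.
have : forall U : set T, exists y, [set U | F U /\ S `<=` U] U -> X y /\ ~ U y.
  move=> U; case: (pselect ([set U | F U /\ S `<=` U] U)) => [[FU _]|nU].
    have /existsNP [y] := FnX U FU.
    by move=> /not_implyP [Xy nUy]; exists y.
  by exists x0.
move=> /choice [yf hyf].
have [U' [FU' SU']] : exists U, F U /\ (S `|` yf @` [set U | F U /\ S `<=` U]) `<=` U.
  apply: om; first by rewrite finite_setU; split => //; apply: finite_image.
  by move=> t [/SX //|[U HU <-]]; case: (hyf U HU).
have HU' : [set U | F U /\ S `<=` U] U' by split => // t St; apply: SU'; left.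
by case: (hyf U' HU') => _; apply; apply: SU'; right; exists U'.
Qed.

End om.


Lemma enum_inf (T : Type) (F : set (set T)) : countable F -> infinite_set F ->
  exists e : nat -> set T, injective e /\ F = range e.
Proof.
move=> cF iF.
have /pcard_eqP/bijPex [e [fe ie se]] : ([set: nat] #= F)%card.
  by rewrite card_eq_sym; exact: eq_card_nat.
exists e; split; first by move=> m n /(ie m n (mem_set I) (mem_set I)).
apply/seteqP; split => // U [n _ <-]; exact: fe.
Qed.

Section halfs.
Variables (T : Type) (X : set T) (P : set T -> Prop) (F : set (set T)) (e : nat -> set T).
Hypotheses (Fe : F = range e) (ie : injective e) (cF : countable F)
  (PF : forall U, F U -> P U) (coverF : is_cover X F).

Lemma half_cover (S : set nat) : (forall x, X x -> infinite_set (S `&` [set n | e n x])) ->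
  [/\ countable (e @` S), (forall U, (e @` S) U -> P U), large_cover X (e @` S) & e @` S `<=` F].
Proof.
move=> Sinf.
have sub : e @` S `<=` F by rewrite Fe => _ [n _ <-]; exists n.
case: coverF => [FX [UF FnX]].
split => //.
- exact: sub_countable (subset_card_le sub) cF.
- by move=> U /sub /PF.
- split; last first.
    move=> x Xx; apply: sub_infinite_set (inj_image_inf ie (Sinf x Xx)).
    by move=> _ [n [Sn enx] <-]; split => //; exists n.
  split; first by move=> U /sub /FX.
  split; last by move=> U /sub /FnX.
  apply/seteqP; split; first by move=> x [U /sub /FX]; apply.
  move=> x Xx; have /infinite_setN0 [n [Sn enx]] := Sinf x Xx.
  by exists (e n) => //; exists n.
Qed.

Lemma tau_sub (G : set (set T)) : G `<=` F -> tau_cover X F -> large_cover X G -> tau_cover X G.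
Proof.
move=> GF [_ tF] lG; split => // x y Xx Xy.
case: (tF x y Xx Xy) => h; [left|right]; apply: sub_finite_set h;
  by move=> U [/GF].
Qed.
End halfs.


Lemma splitZ (Z : set nat) : infinite_set Z ->
  exists a, infinite_set (Z `&` a) /\ infinite_set (Z `\` a).
Proof.
move=> /infiniteP /pcard_leP /injfunPex [h hf hi].
have hinj : injective h by move=> m n /(hi m n (mem_set I) (mem_set I)).
have d2inj : injective (fun k => h k.*2) by move=> m n /hinj; lia.
have d2inj' : injective (fun k => h k.*2.+1).
  by move=> m n /hinj; lia.
have iT := infinite_nat.
exists (range (fun k => h k.*2)); split.
  apply: sub_infinite_set (inj_image_inf d2inj iT).
  by move=> _ [k _ <-]; split; [exact: hf|exists k].
apply: sub_infinite_set (inj_image_inf d2inj' iT).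
move=> _ [k _ <-]; split; first exact: hf.
move=> [j _ /hinj] /(congr1 odd); rewrite /= !odd_double //.
Qed.

Section rev.
Variables (T : eqType) (X : set T) (g : T -> set nat).
Hypothesis X0 : X !=set0.
Hypothesis ub : ultrafilter_base (g @` X).

Let Fam := [set a | infinite_set a /\ exists2 b, (g @` X) b & subset_star b a].
Definition Un n := [set x | X x /\ g x n].
Definition Fr := [set V | exists n, V = Un n /\ ~ (X `<=` V)].

Let ginf x : X x -> infinite_set (g x).
Proof. by move=> Xx; apply: ub.1; exists x. Qed.

Let FamI a b : Fam a -> Fam b -> Fam (a `&` b).
Proof. by case: ub => _ [_ [_ [_ [h _]]]]; apply: h. Qed.

Let FamU a : Fam a \/ Fam (~` a).
Proof. by case: ub => _ [_ [_ [_ [_ [h _]]]]]; apply: h. Qed.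

Let FamT : Fam setT.
Proof. by case: ub => _ [_ [h _]]. Qed.

Let Famg x : X x -> Fam (g x).
Proof.
move=> Xx; split; first exact: ginf.
by exists (g x); [exists x|rewrite /subset_star setDv; exact: finite_set0].
Qed.

Let Famsplit a : Fam a -> exists2 x, X x & finite_set (g x `\` a).
Proof. by move=> [_ [_ [x Xx <-] h]]; exists x. Qed.

Lemma NZ : ~ Fam [set n | forall x, X x -> g x n].
Proof.
set Z := [set n | _]; move=> FZ.
have [a [i1 i2]] := splitZ FZ.1.
case: (FamU a) => /Famsplit [x Xx fx].
  by apply: i2; apply: sub_finite_set fx => n [Zn nan]; split => //; apply: Zn.
by apply: i1; apply: sub_finite_set fx => n [Zn an]; split => [|/(_ an)//]; apply: Zn.
Qed.

Lemma Fam_seq (s : seq T) : (forall x, x \in s -> X x) ->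
  Fam [set n | forall x, x \in s -> g x n].
Proof.
elim: s => [|y s IH] hs.
  by rewrite (_ : [set n | _] = setT) //; apply/seteqP; split => // n _ x.
rewrite (_ : [set n | _] = g y `&` [set n | forall x, x \in s -> g x n]).
  apply: FamI; first by apply: Famg; apply: hs; rewrite inE eqxx.
  by apply: IH => x xs; apply: hs; rewrite inE xs orbT.
apply/seteqP; split => n /=.
  by move=> h; split => [|x xs]; apply: h; rewrite inE ?eqxx ?xs ?orbT.
by move=> [gy h] x; rewrite inE => /orP [/eqP ->|/h].
Qed.

Lemma Fr_omega : omega_cover X Fr.
Proof.
have om : forall S, finite_set S -> S `<=` X -> exists U, Fr U /\ S `<=` U.
  move=> S /finite_seqP [s ->] sX.
  have Fs := Fam_seq (fun x xs => sX x xs).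
  have : ~ (forall n, (forall x, x \in s -> g x n) -> forall x, X x -> g x n).
    move=> sub; apply: NZ; case: Fs => i [b bb sb]; split.
      exact: sub_infinite_set sub i.
    exists b => //; apply: sub_finite_set sb => n [bn nn]; split => // /sub /nn [].
  move=> hn; have [n hn2] := (iffRL (existsNP _)) hn; have [sn nZ] := (iffLR (not_implyP _ _)) hn2.
  exists (Un n); split.
    exists n; split => // XU; apply: nZ => x Xx; exact: (XU x Xx).2.
  by move=> x xs; split; [exact: sX| exact: sn].
split => //; split.
  by move=> U [n [-> _]] x [].
split; last by move=> U [n [_ h]].
apply/seteqP; split; first by move=> x [U [n [-> _]]] [].
move=> x Xx; have [U [FU sU]] := om [set x] (finite_set1 x) (fun y (e : y = x) => eq_ind_r X Xx e).
by exists U => //; apply: sU.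
Qed.

Lemma Fr_countable : countable Fr.
Proof.
apply: sub_countable (subset_card_le (_ : Fr `<=` range Un)) _.
  by move=> _ [n [-> _]]; exists n.
exact: sub_countable (card_image_le _ _) (countableP _).
Qed.

Lemma Fr_tau : (forall x y, X x -> X y -> subset_star (g x) (g y) \/ subset_star (g y) (g x)) ->
  tau_cover X Fr.
Proof.
move=> lin; have om := Fr_omega.
split.
  split; first exact: om.1.
  move=> x Xx; have := omega_inf X0 om (finite_set1 x) (fun y (e : y = x) => eq_ind_r X Xx e).
  by apply: contra_not; apply: sub_finite_set => U [FU sU]; split => //; apply: sU.
move=> x y Xx Xy.
have key x' y' : X y' -> subset_star (g x') (g y') ->
    finite_set [set U | Fr U /\ U x' /\ ~ U y'].
  move=> Xy' sxy; apply: sub_finite_set (finite_image Un sxy).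
  by move=> _ [[n [-> _]] [[_ gx] nU]]; exists n => //; split => // gy; apply: nU.
by case: (lin x y Xx Xy) => h; [left|right]; apply: key.
Qed.

Lemma Fr_nosplit (F1 F2 G1 G2 : set (set T)) : F1 `|` F2 = Fr -> F1 `&` F2 = set0 ->
  G1 `<=` F1 -> large_cover X G1 -> G2 `<=` F2 -> large_cover X G2 -> False.
Proof.
move=> FU FI GF1 [_ lG1] GF2 [_ lG2].
have big (F' G' : set (set T)) : G' `<=` F' -> F' `<=` Fr ->
    (forall x, X x -> infinite_set [set U | G' U /\ U x]) ->
    forall x, X x -> infinite_set ([set n | F' (Un n)] `&` g x).
  move=> GF' F'F lG' x Xx fin; apply: (lG' x Xx).
  apply: sub_finite_set (finite_image Un fin).
  move=> U [/[dup] GU /GF' /[dup] FU' /F'F [n [UE _]] Ux]; exists n => //.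
  by split => /=; [rewrite -UE|rewrite UE in Ux; case: Ux].
have F1F : F1 `<=` Fr by rewrite -FU => U; left.
have F2F : F2 `<=` Fr by rewrite -FU => U; right.
have i1 := big _ _ GF1 F1F lG1.
have i2 := big _ _ GF2 F2F lG2.
case: (FamU [set n | F1 (Un n)]) => /Famsplit [x Xx fx].
  apply: (i2 x Xx); apply: sub_finite_set fx => n [F2n gn]; split => // F1n.
  by have : (F1 `&` F2) (Un n) by [] ; rewrite FI.
apply: (i1 x Xx); apply: sub_finite_set fx => n [F1n gn]; split => //.
Qed.
End rev.


Definition cylN (s : cantor_space) (N : nat) : set cantor_space :=
  [set t | forall i, (i < N)%N -> t i = s i].

Lemma open_cyl (O : set cantor_space) s : open O -> O s -> exists N, cylN s N `<=` O.
Proof.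
move=> oO Os.
pose Fs := filter_from [set: nat] (cylN s).
have FF : Filter Fs.
  apply: filter_from_filter; first by exists 0%N.
  move=> i j _ _; exists (maxn i j) => // t ht; split => k hk; apply: ht.
    by rewrite leq_max hk.
  by rewrite leq_max hk orbT.
have cv : Fs --> (s : cantor_space).
  apply/cvg_sup => i U [V] [[W] oW <-] WsI WU.
  exists i.+1 => // t ht; apply: WU; rewrite /= ht //.
have : Fs O by apply: cv; apply: open_nbhs_nbhs.
by case=> N _ h; exists N.
Qed.

Definition famf (T : Type) (e : nat -> set T) (x : T) : cantor_space :=
  fun n => `[< e n x >].

Lemma famfE (T : Type) (e : nat -> set T) x : set_of_char (famf e x) = [set n | e n x].
Proof. by apply/funext => n; rewrite /set_of_char /famf /= asboolE. Qed.

Section topo.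
Variables (T : topologicalType) (X : set T).

Lemma famf_cont (e : nat -> set T) : (forall n, clopen_in X (e n)) ->
  {within X, continuous (famf e)}.
Proof.
move=> ce; apply/subspace_continuousP => x Xx.
apply/cvg_sup => i U [V] [[W] oW <-] WsI WU.
have key : within X (nbhs x) [set y | famf e y i = famf e x i].
  have [_ [[O [oO eO]] [C [cC eC]]]] := ce i.
  case: (pselect (e i x)) => exi.
    have Ox : O x by move: exi; rewrite eO => -[].
    apply: filterS (open_nbhs_nbhs (conj oO Ox)) => y Oy Xy.
    by rewrite /famf /= !asboolT // eO.
  have nCx : (~` C) x by move=> Cx; apply: exi; rewrite eC.
  apply: filterS (open_nbhs_nbhs (conj (closed_openC cC) nCx)) => y nCy Xy.
  by rewrite /famf /= !asboolF // eC => -[].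
rewrite nbhs_simpl; apply: filterS key => y /= h; apply: WU.
by change (W (famf e y i)); rewrite h.
Qed.
Lemma cont_clopen (f : T -> cantor_space) n : {within X, continuous f} ->
  clopen_in X [set x | X x /\ f x n].
Proof.
move=> cf.
pose h := (fun s : cantor_space => s n) \o (f : subspace X -> cantor_space).
have ch : continuous h.
  move=> x; apply: continuous_comp; first exact: cf.
  exact: (@proj_continuous nat (fun _ => bool) n).
have ob (b : bool) : open (h @^-1` [set b]) by move/continuousP: ch; apply; exact: discrete_open.
split; first by move=> x [].
split.
  have /open_subspaceP [V oV VE] := ob true.
  exists V; split => //; rewrite VE; apply/seteqP; split => x /=.
    by move=> [Xx fx]; split.
  by move=> [fx Xx]; split.
have : closed (~` (h @^-1` [set false]) : set (subspace X)) by apply: open_closedC.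
move=> /closed_subspaceP [C cC CE]; exists C; split => //; rewrite CE.
apply/seteqP; split => x /=.
  by move=> [Xx fx]; split => //; rewrite /h /= fx.
by move=> [fx Xx]; split => //; move: fx; rewrite /h /=; case: (f x n).
Qed.
Lemma borel_bigcap (B : nat -> set T) : (forall k, borel (B k)) -> borel (\bigcap_k B k).
Proof.
move=> bB.
have -> : \bigcap_k B k = setT `\` \bigcup_k (setT `\` B k).
  apply/seteqP; split => x /=.
    by move=> h; split => // -[k _ [_]]; apply; apply: h.
  by move=> [_ h] k _; apply: contrapT => nB; apply: h; exists k.
rewrite /borel; apply: sigma_algebraCD; apply: sigma_algebra_bigcup => k; apply: sigma_algebraCD; exact: bB.
Qed.

Lemma famf_borel (e : nat -> set T) : (forall n, borel_in X (e n)) -> borel_fun_on X (famf e).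
Proof.
move=> be.
have /choice [Be hBe] : forall n, exists B, borel B /\ e n = B `&` X.
  by move=> n; case: (be n) => _ [B [bB eB]]; exists B.
pose S := [set B : set cantor_space | borel_in X (X `&` famf e @^-1` B)].
have S0 : S set0.
  split; first by move=> x [].
  exists set0; split; first exact: sigma_algebra0.
  by rewrite set0I preimage_set0 setI0.
have SC : forall A, S A -> S (setT `\` A).
  move=> A [_ [B0 [bB0 eB0]]]; split; first by move=> x [].
  exists (setT `\` B0); split; first exact: sigma_algebraCD.
  apply/seteqP; split => x /=.
    move=> [Xx [_ nA]]; split => //; split => // B0x; apply: nA.
    by have : (B0 `&` X) x by []; rewrite -eB0 => -[].
  move=> [[_ nB0] Xx]; split => //; split => // Ax; apply: nB0.
  by have : (X `&` famf e @^-1` A) x by []; rewrite eB0 => -[].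
have SU : forall A : nat -> set cantor_space, (forall n, S (A n)) -> S (\bigcup_k A k).
  move=> A hA.
  have /choice [B0 hB0] : forall n, exists B, borel B /\ X `&` famf e @^-1` A n = B `&` X.
    by move=> n; case: (hA n) => _ [B hB]; exists B.
  split; first by move=> x [].
  exists (\bigcup_k B0 k); split; first by rewrite /borel; apply: sigma_algebra_bigcup => k; case: (hB0 k) => h _; exact: h.
  apply/seteqP; split => x /=.
    move=> [Xx [k _ Akx]]; split => //; exists k => //.
    by have : (X `&` famf e @^-1` A k) x by []; rewrite (hB0 k).2 => -[].
  move=> [[k _ B0x] Xx]; split => //; exists k => //.
  by have : (B0 k `&` X) x by []; rewrite -(hB0 k).2 => -[].
have Scyl : forall s N, S (cylN s N).
  move=> s N; split; first by move=> x [].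
  pose Ck k := if (k < N)%N then (if s k then Be k else ~` Be k) else setT.
  exists (\bigcap_k Ck k); split.
    apply: borel_bigcap => k; rewrite /Ck; case: ifP => _; last first.
      by rewrite -(setD0 setT) /borel; apply: sigma_algebraCD; exact: sigma_algebra0.
    case: (s k); first by case: (hBe k).
    rewrite -setTD /borel; apply: sigma_algebraCD; by case: (hBe k).
  apply/seteqP; split => x /=.
    move=> [Xx hx]; split => // k _; rewrite /Ck; case: ifP => // kN.
    have := hx k kN; rewrite /famf.
    have ex : e k x = Be k x by rewrite (hBe k).2 /=; apply: propext; split => [[]//|?]; split.
    by case: (s k) => /=; rewrite -ex; case: asboolP.
  move=> [hx Xx]; split => // k kN; have := hx k I; rewrite /Ck kN /famf.
  have ex : e k x = Be k x by rewrite (hBe k).2 /=; apply: propext; split => [[]//|?]; split.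
  by case: (s k); case: (asboolP (e k x)); rewrite ex.
move=> B bB; rewrite /borel in bB; apply: (@smallest_sub _ (sigma_algebra setT) _ S _ _ _ bB); first by split.
move=> O oO.
pose W k : set cantor_space := if unpickle k is Some p then
   (if `[< cylN (fun i => nth false p i) (size p) `<=` O >]
    then cylN (fun i => nth false p i) (size p) else set0) else set0.
have -> : O = \bigcup_k W k.
  apply/seteqP; split => [s Os|s [k _]]; last first.
    by rewrite /W; case: (unpickle k) => // p; case: asboolP => // h /h.
  have [N hN] := open_cyl oO Os.
  have cE : cylN (fun i => nth false (mkseq s N) i) (size (mkseq s N)) = cylN s N.
    apply/seteqP; rewrite size_mkseq; split => t ht i iN; rewrite ht // nth_mkseq //.
  exists (pickle (mkseq s N)) => //; rewrite /W pickleK cE.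
  by case: asboolP => // _; move=> i _.
apply: SU => k; rewrite /W; case: (unpickle k) => // p; case: asboolP => // _.
Qed.

Lemma borel_fun_borel (f : T -> cantor_space) n : borel_fun_on X f ->
  borel_in X [set x | X x /\ f x n].
Proof.
move=> bf.
have o : open [set s : cantor_space | s n].
  have ch : continuous (fun s : cantor_space => s n).
    by move=> s; exact: (@proj_continuous nat (fun _ => bool) n).
  by move/continuousP: ch => /(_ [set true]); apply; exact: discrete_open.
have := bf _ (sub_gen_smallest o).
by congr borel_in.
Qed.
End topo.


Lemma star_refl (a : set nat) : subset_star a a.
Proof. by rewrite /subset_star setDv; exact: finite_set0. Qed.

Lemma star_trans (a b c : set nat) : subset_star a b -> subset_star b c -> subset_star a c.
Proof.
move=> ab bc; have : finite_set ((a `\` b) `|` (b `\` c)) by rewrite finite_setU.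
apply: sub_finite_set => n [an nc].
by case: (pselect (b n)) => bn; [right|left].
Qed.

Lemma star_cent (w a b c : set nat) : infinite_set w -> subset_star w a -> subset_star w b ->
  subset_star w c -> infinite_set (a `&` b `&` c).
Proof.
move=> iw wa wb wc; apply: (star_inf _ iw).
have : finite_set ((w `\` a) `|` (w `\` b) `|` (w `\` c)) by rewrite !finite_setU.
apply: sub_finite_set => n [wn nabc].
case: (pselect (a n)) => an; last by left; left.
case: (pselect (b n)) => bn; last by left; right.
by right; split => // cn; apply: nabc.
Qed.

Lemma lin_cent (a b c : set nat) : infinite_set a -> infinite_set b -> infinite_set c ->
  (subset_star a b \/ subset_star b a) -> (subset_star a c \/ subset_star c a) ->
  (subset_star b c \/ subset_star c b) -> infinite_set (a `&` b `&` c).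
Proof.
move=> ia ib ic ab ac bc.
have r := star_refl.
case: ab => ab.
  case: ac => ac; first by apply: (star_cent ia).
  by apply: (star_cent ic) => //; exact: star_trans ac ab.
case: bc => bc; first by apply: (star_cent ib).
by apply: (star_cent ic) => //; exact: star_trans bc ab.
Qed.

Section main.
Variables (T : eqType) (X : set T) (P : set T -> Prop) (Cls : (T -> cantor_space) -> Prop).
Hypothesis X0 : X !=set0.
Hypothesis hP1 : forall e : nat -> set T, (forall n, P (e n)) -> Cls (famf e).
Hypothesis hP2 : forall f n, Cls f -> P [set x | X x /\ f x n].

Let PO := [set F | countable F /\ (forall U, F U -> P U) /\ omega_cover X F].
Let PL := [set F | countable F /\ (forall U, F U -> P U) /\ large_cover X F].
Let PT := [set F | countable F /\ (forall U, F U -> P U) /\ tau_cover X F].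

Lemma image_famf (e : nat -> set T) : image_fam X (famf e) = [set [set n | e n x] | x in X].
Proof. by rewrite /image_fam; under eq_imagel do rewrite famfE. Qed.

Lemma Fr_P f : Cls f -> forall U, Fr X (fun x => set_of_char (f x)) U -> P U.
Proof. by move=> cf U [n [-> _]]; exact: hP2. Qed.

Lemma split_part (F : set (set T)) (e : nat -> set T) (a : set nat) :
  F = range e -> injective e -> countable F -> (forall U, F U -> P U) -> is_cover X F ->
  (forall x, X x -> infinite_set (a `&` [set n | e n x]) /\ infinite_set (~` a `&` [set n | e n x])) ->
  exists F1 F2 : set (set T), F1 `|` F2 = F /\ F1 `&` F2 = set0 /\
    (PL F1 /\ F1 `<=` F) /\ (PL F2 /\ F2 `<=` F).
Proof.
move=> Fe ie cF PF cov hs.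
have [c1 P1 l1 s1] := half_cover Fe ie cF PF cov (fun x Xx => (hs x Xx).1).
have [c2 P2 l2 s2] := half_cover Fe ie cF PF cov (fun x Xx => (hs x Xx).2).
exists (e @` a), (e @` ~` a); split; last split; last by split; split.
  rewrite Fe; apply/seteqP; split; first by move=> U [] [n _ <-]; exists n.
  move=> U [n _ <-]; case: (pselect (a n)) => an; [left|right]; by exists n.
apply/seteqP; split => // U [[n an <-] [m nam /ie mn]].
by move: nam; rewrite mn.
Qed.

Lemma omega_part : SplitCov PO PL <->
  ~ exists f, Cls f /\ into_infinite X f /\ ultrafilter_base (image_fam X f).
Proof.
split.
  move=> sp [f [cf [inf ub]]].
  have om := @Fr_omega _ X (fun x => set_of_char (f x)) ub.
  have [F1 [F2 [FU [FI [[G1 [G1F [_ [_ lG1]]]] [G2 [G2F [_ [_ lG2]]]]]]]]] :=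
    sp _ (conj (Fr_countable X (fun x => set_of_char (f x))) (conj (Fr_P cf) om)).
  exact: (@Fr_nosplit _ X (fun x => set_of_char (f x)) ub _ _ _ _ FU FI G1F lG1 G2F lG2).
move=> nf F [cF [PF omF]].
have iF : infinite_set F.
  have := omega_inf X0 omF (finite_set0 T) (sub0set X).
  by apply: contra_not; apply: sub_finite_set => U [].
have [e [ie Fe]] := enum_inf cF iF.
pose g x := [set n | e n x].
have sube (S : set T) : [set U | F U /\ S `<=` U] `<=` e @` [set n | S `<=` e n].
  by move=> U [FU SU]; move: FU; rewrite Fe => -[n _ en]; exists n => //=; rewrite en.
case: (pselect (exists a, forall x, X x -> infinite_set (a `&` g x) /\ infinite_set (~` a `&` g x))).
  move=> [a ha].
  have [F1 [F2 [FU [FI [[pl1 _] [pl2 _]]]]]] := split_part Fe ie cF PF omF.1 ha.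
  exists F1, F2; split => //; split => //; split; [exists F1|exists F2]; split => // U.
move=> nsp; exfalso; apply: nf; exists (famf e).
have ginf x : X x -> infinite_set (g x).
  move=> Xx; have := omega_inf X0 omF (finite_set1 x) (fun y (h : y = x) => eq_ind_r X Xx h).
  apply: contra_not => fg; apply: sub_finite_set (sube _) _.
  apply: sub_finite_set (finite_image e fg) => _ [n hn <-]; exists n => //; exact: hn.
split; first by apply: hP1 => n; apply: PF; rewrite Fe; exists n.
split; first by move=> x Xx; rewrite famfE; exact: ginf.
rewrite image_famf; apply: (nosplit_base X0 ginf).
  move=> x y z Xx Xy Xz.
  have SX : [set x; y; z] `<=` X by move=> t [[->|->]|->].
  have := omega_inf X0 omF (finite_set3 x y z) SX.
  apply: contra_not => fg; apply: sub_finite_set (sube _) _.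
  apply: sub_finite_set (finite_image e fg) => _ [n hn <-]; exists n => //.
  by rewrite /g /=; split; [split|]; apply: hn; [left;left|left;right|right].
move=> a; move/forallNP: nsp => /(_ a) /existsNP [x /not_implyP [Xx h]].
exists x => //; case: (iffLR (not_andP _ _) h) => /contrapT fin; [right|left].
  by apply: sub_finite_set fin => n [gn nna]; split => //; apply: contrapT.
by apply: sub_finite_set fin => n [gn na].
Qed.
Lemma tau_part : SplitCov PT PT <->
  ~ exists f, Cls f /\ into_infinite X f /\ simple_P_point_base (image_fam X f).
Proof.
split.
  move=> sp [f [cf [inf [ub lin]]]].
  have lin' : forall x y, X x -> X y -> subset_star (set_of_char (f x)) (set_of_char (f y))
      \/ subset_star (set_of_char (f y)) (set_of_char (f x)).
    by move=> x y Xx Xy; apply: lin; [exists x|exists y].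
  have ta := @Fr_tau _ X (fun x => set_of_char (f x)) X0 ub lin'.
  have [F1 [F2 [FU [FI [[G1 [G1F [_ [_ [lG1 _]]]]] [G2 [G2F [_ [_ [lG2 _]]]]]]]]]] :=
    sp _ (conj (Fr_countable X (fun x => set_of_char (f x))) (conj (Fr_P cf) ta)).
  exact: (@Fr_nosplit _ X (fun x => set_of_char (f x)) ub _ _ _ _ FU FI G1F lG1 G2F lG2).
move=> nf F [cF [PF [lF tF]]].
have iF : infinite_set F.
  have [x Xx] := X0; have := lF.2 x Xx.
  by apply: contra_not; apply: sub_finite_set => U [].
have [e [ie Fe]] := enum_inf cF iF.
pose g x := [set n | e n x].
have ginf x : X x -> infinite_set (g x).
  move=> Xx; have := lF.2 x Xx; apply: contra_not => fg.
  apply: sub_finite_set (finite_image e fg) => U [FU Ux].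
  by move: FU; rewrite Fe => -[n _ en]; exists n => //; rewrite /g /= en.
have lin x y : X x -> X y -> subset_star (g x) (g y) \/ subset_star (g y) (g x).
  move=> Xx Xy.
  have key x' y' : finite_set [set U | F U /\ U x' /\ ~ U y'] -> subset_star (g x') (g y').
    move=> fin; apply: contrapT => inf'; apply: (inj_image_inf ie inf').
    apply: sub_finite_set fin => _ [n [gx gy] <-]; split; first by rewrite Fe; exists n.
    by split.
  by case: (tF x y Xx Xy) => h; [left|right]; apply: key.
case: (pselect (exists a, forall x, X x -> infinite_set (a `&` g x) /\ infinite_set (~` a `&` g x))).
  move=> [a ha].
  have [F1 [F2 [FU [FI [[pl1 s1] [pl2 s2]]]]]] := split_part Fe ie cF PF lF.1 ha.
  exists F1, F2; split => //; split => //; split; [exists F1|exists F2]; split; try by move=> U.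
    case: pl1 => [c1 [P1 l1]]; split => //; split => //; exact: tau_sub s1 (conj lF tF) l1.
  case: pl2 => [c2 [P2 l2]]; split => //; split => //; exact: tau_sub s2 (conj lF tF) l2.
move=> nsp; exfalso; apply: nf; exists (famf e).
split; first by apply: hP1 => n; apply: PF; rewrite Fe; exists n.
split; first by move=> x Xx; rewrite famfE; exact: ginf.
rewrite image_famf; split; last first.
  by move=> _ _ [x Xx <-] [y Xy <-]; exact: lin.
apply: (nosplit_base X0 ginf).
  move=> x y z Xx Xy Xz; apply: lin_cent; try exact: ginf; exact: lin.
move=> a; move/forallNP: nsp => /(_ a) /existsNP [x /not_implyP [Xx h]].
exists x => //; case: (iffLR (not_andP _ _) h) => /contrapT fin; [right|left].
  by apply: sub_finite_set fin => n [gn nna]; split => //; apply: contrapT.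
by apply: sub_finite_set fin => n [gn na].
Qed.
End main.


End Aux.
Import Aux.

Theorem theorem3p5 (R : realType) (X : set R) (HX : infinite_set X) :
  (SplitCov (C_Omega X) (C_Lambda X) <->
     ~ exists f : R -> cantor_space,
         {within X, continuous f} /\ into_infinite X f /\ ultrafilter_base (image_fam X f)) /\
  (SplitCov (B_Omega X) (B_Lambda X) <->
     ~ exists f : R -> cantor_space,
         borel_fun_on X f /\ into_infinite X f /\ ultrafilter_base (image_fam X f)) /\
  (SplitCov (C_Tau X) (C_Tau X) <->
     ~ exists f : R -> cantor_space,
         {within X, continuous f} /\ into_infinite X f /\ simple_P_point_base (image_fam X f)) /\
  (SplitCov (B_Tau X) (B_Tau X) <->
     ~ exists f : R -> cantor_space,
         borel_fun_on X f /\ into_infinite X f /\ simple_P_point_base (image_fam X f)).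
Proof.
have X0 := infinite_setN0 HX.
have c1 : forall e : nat -> set R, (forall n, clopen_in X (e n)) -> {within X, continuous (famf e)}.
  by move=> e; exact: famf_cont.
have c2 : forall (f : R -> cantor_space) n, {within X, continuous f} -> clopen_in X [set x | X x /\ f x n].
  by move=> f n; exact: cont_clopen.
have b1 : forall e : nat -> set R, (forall n, borel_in X (e n)) -> borel_fun_on X (famf e).
  by move=> e; exact: famf_borel.
have b2 : forall (f : R -> cantor_space) n, borel_fun_on X f -> borel_in X [set x | X x /\ f x n].
  by move=> f n; exact: borel_fun_borel.
split; first exact: (@omega_part R X _ _ X0 c1 c2).
split; first exact: (@omega_part R X _ _ X0 b1 b2).
split; first exact: (@tau_part R X _ _ X0 c1 c2).
exact: (@tau_part R X _ _ X0 b1 b2).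
Qed.
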